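(* In the social learning model with Gaussian signals, for every $\varepsilon>0$ there exists $k>0$ such that for all $t\ge 1$, $$\mathbb{P}(T_1=t)\ge\frac{k}{t^{1+\varepsilon}}.$$
   Context: Social learning model. A state $\theta\in\{-1,+1\}$ is drawn with $\mathbb{P}(\theta=+1)=\mathbb{P}(\theta=-1)=1/2$. Agents $t=1,2,\dots$ receive private signals $s_t\in\mathbb{R}$ that are i.i.d. conditionally on $\theta$, with CDF $F_+$ if $\theta=+1$ and $F_-$ if $\theta=-1$; $F_+$ and $F_-$ are mutually absolutely continuous. Let $L_t=\log\frac{\mathbb{P}(\theta=+1\mid s_t)}{\mathbb{P}(\theta=-1\mid s_t)}$ be the private log-likelihood ratio, and let $G_+$, $G_-$ denote the CDFs of $L_t$ conditional on $\theta=+1$, $\theta=-1$ respectively. Signals are assumed unbounded: for every $M\in\mathbb{R}$, $\mathbb{P}(L_t>M)>0$ and $\mathbb{P}(L_t<-M)>0$. Agent $t$ observes $a_1,\dots,a_{t-1}$ and her own signal and chooses $a_t\in\{-1,+1\}$ (utility $1$ if $a_t=\theta$, else $0$). The public belief is $\mu_t=\mathbb{P}(\theta=+1\mid a_1,\dots,a_{t-1})$ and $\ell_t=\log\frac{\mu_t}{1-\mu_t}$ (so $\ell_1=0$). In equilibrium $a_t=+1$ iff $\ell_t+L_t>0$, and otherwise $a_t=-1$. Consequently $\ell_{t+1}=\ell_t+D_+(\ell_t)$ if $a_t=+1$ and $\ell_{t+1}=\ell_t+D_-(\ell_t)$ if $a_t=-1$, where $D_+(x)=\log\frac{1-G_+(-x)}{1-G_-(-x)}$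 and $D_-(x)=\log\frac{G_+(-x)}{G_-(-x)}$. We write $\mathbb{P}_+(\cdot)=\mathbb{P}(\cdot\mid\theta=+1)$ and $\mathbb{E}_+$ for the corresponding expectation. Gaussian signals: $F_+$ is the normal distribution with mean $+1$ and variance $\sigma^2$, and $F_-$ is the normal distribution with mean $-1$ and variance $\sigma^2$, for some $\sigma>0$. The time of first mistake is $T_1=\min\{t: a_t\ne\theta\}$ if $a_t\neq\theta$ for some $t$, and $T_1=0$ otherwise. *)

(* Defs.v *)
From Stdlib Require Import Reals Lra List.
Open Scope R_scope.

Definition gauss (u : R) : R := exp (- (u ^ 2) / 2).

Lemma gauss_integrable (a b : R) : Riemann_integrable gauss a b.
Proof.
  assert (Hc : forall x, continuity_pt gauss x) by (intros; unfold gauss; reg).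
  destruct (Rle_dec a b) as [H|H].
  - apply continuity_implies_RiemannInt; auto.
  - apply RiemannInt_P1, continuity_implies_RiemannInt; auto; lra.
Qed.

Definition Phi (x : R) : R :=
  / 2 + / sqrt (2 * PI) * RiemannInt (gauss_integrable 0 x).

(* Signal CDFs: N(+1, sigma^2) and N(-1, sigma^2). *)
Definition Fplus (sigma s : R) : R := Phi ((s - 1) / sigma).
Definition Fminus (sigma s : R) : R := Phi ((s + 1) / sigma).

(* Private log-likelihood ratio of a signal s (with prior 1/2):
   L(s) = ln (f_+(s) / f_-(s)) = 2 s / sigma^2, strictly increasing in s. *)
Definition llr (sigma s : R) : R :=
  ln (exp (- (s - 1) ^ 2 / (2 * sigma ^ 2)) / exp (- (s + 1) ^ 2 / (2 * sigma ^ 2))).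

(* CDFs of L conditional on the state: G_theta(x) = P_theta(2 s/sigma^2 <= x)
   = F_theta(sigma^2 x / 2). *)
Definition Gplus (sigma x : R) : R := Fplus sigma (sigma ^ 2 * x / 2).
Definition Gminus (sigma x : R) : R := Fminus sigma (sigma ^ 2 * x / 2).

(* States / actions: true = +1, false = -1. *)
Definition Gth (sigma : R) (th : bool) (x : R) : R :=
  if th then Gplus sigma x else Gminus sigma x.

Definition Dplus (sigma x : R) : R :=
  ln ((1 - Gplus sigma (- x)) / (1 - Gminus sigma (- x))).
Definition Dminus (sigma x : R) : R :=
  ln (Gplus sigma (- x) / Gminus sigma (- x)).

(* Public log-likelihood update after action a at public belief l. *)
Definition update (sigma l : R) (a : bool) : R :=
  if a then l + Dplus sigma l else l + Dminus sigma l.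

(* Probability, given state th and public belief l, that the agent takes
   action a: a = +1 iff l + L > 0. *)
Definition pact (sigma : R) (th : bool) (l : R) (a : bool) : R :=
  if a then 1 - Gth sigma th (- l) else Gth sigma th (- l).

Fixpoint hist_prob (sigma : R) (th : bool) (l : R) (h : list bool) : R :=
  match h with
  | nil => 1
  | a :: h' => pact sigma th l a * hist_prob sigma th (update sigma l a) h'
  end.

(* P(T_1 = t) for t >= 1: first t-1 actions correct, action t wrong,
   averaged over the two equally likely states; ell_1 = 0. *)
Definition ProbT1 (sigma : R) (t : nat) : R :=
  / 2 * hist_prob sigma true 0 (repeat true (t - 1) ++ false :: nil)
  + / 2 * hist_prob sigma false 0 (repeat false (t - 1) ++ true :: nil).

(* Main.v *)
Require Import Defs.
From Stdlib Require Import Reals Lra Lia List.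
Open Scope R_scope.

From mathcomp Require all_boot all_order all_algebra.
From mathcomp Require all_classical all_reals all_analysis.
From mathcomp Require Rstruct Rstruct_topology.

Module Bridge.
Import all_boot all_order all_algebra.
Import all_classical all_reals all_analysis.
Import Rstruct Rstruct_topology.
Import Order.TTheory GRing.Theory Num.Theory.
Import numFieldNormedType.Exports.
Local Open Scope classical_set_scope.
Local Open Scope ring_scope.

Lemma bridge_deriv (f : R^o -> R^o) (x l : R) :
  derivable_pt_lim f x l -> derivable f x 1 /\ derive1 f x = l.
Proof.
move=> H.
have C : (fun h : R^o => h^-1 *: (f (h + x) - f x)) @ 0^' --> (l : R^o).
  apply/cvgrPdist_lt => e e0.
  have /RltP e0' := e0.
  have [d Hd] := H e e0'.
  rewrite /prop_near1 /within /=.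
  apply/nbhs_ballP; exists (pos d); first by apply/RltP; apply: cond_pos.
  move=> t Bt tn0.
  have := Hd t (fun E => (negP tn0) (introT eqP E)).
  rewrite /ball /= sub0r normrN in Bt.
  have /RltP Bt' := Bt.
  move=> /(_ Bt') /RltP.
  move=> K; rewrite distrC (addrC t x) -[t^-1 *: _]/(t^-1 * _) mulrC; exact: K.
have ex : derivable f x 1.
  rewrite /derivable.
  under eq_fun => h do rewrite /= [h%:A]mulr1.
  by apply/cvg_ex; exists (l:R^o).
split => //.
rewrite /derive1.
exact: cvg_lim.
Qed.

Lemma FTC_bridge (f F : R -> R) (a b : R) : a < b ->
  continuous (f : R^o -> R^o) ->
  (forall t, derivable_pt_lim F t (f t)) ->
  (\int[lebesgue_measure]_(t in `[a, b]) (f t)%:E = (F b)%:E - (F a)%:E)%E.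
Proof.
move=> ab cf HF.
have D t : derivable (F : R^o -> R^o) t 1 /\ derive1 (F : R^o -> R^o) t = f t.
  exact: (@bridge_deriv F t _ (HF t)).
have Fc t : {for t, continuous (F : R^o -> R^o)}.
  by apply: differentiable_continuous; apply/derivable1_diffP; exact: (D t).1.
apply: (@continuous_FTC2 R f F a b ab).
- by apply: continuous_subspaceT.
- split.
  + by move=> t _; exact: (D t).1.
  + by apply: cvg_at_right_filter; exact: Fc.
  + by apply: cvg_at_left_filter; exact: Fc.
- by move=> t _; exact: (D t).2.
Qed.

Lemma piE : pi = PI.
Proof.
have h1 := @FTC_bridge (fun t => (1 + t ^+ 2)^-1) Ratan.atan 0 1 ltr01.
have h2 := @continuous_FTC2 R (fun t => (1 + t ^+ 2)^-1) atan 0 1 ltr01.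
have cf : continuous (fun t : R^o => ((1 + t ^+ 2)^-1 : R^o)).
  move=> t; apply: (@continuousV _ _ (fun t : R => 1 + t ^+ 2)).
    by apply: lt0r_neq0; apply: ltr_pwDl => //; exact: sqr_ge0.
  by apply: cvgD; [exact: cvg_cst | exact: exprn_continuous].
have {}h2 := h2 (continuous_subspaceT cf).
have c2 : derivable_oo_LRcontinuous (@atan R) 0 1.
  split.
    + by move=> t _; exact: derivable_atan.
    + by apply: cvg_at_right_filter; exact: continuous_atan.
    + by apply: cvg_at_left_filter; exact: continuous_atan.
have {}h2 := h2 c2 (fun t _ => derive1_atan t).
have h3 t : derivable_pt_lim Ratan.atan t (1 + t ^+ 2)^-1.
  have := derivable_pt_lim_atan t.
  suff -> : ((/(1 + t^2))%coqR) = (1+t^+2)^-1 by [].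
  by rewrite expr2 /= Rmult_1_r.
have {}h1 := h1 cf h3.
rewrite h2 atan1 atan0 Ratan.atan_1 Ratan.atan_0 in h1.
rewrite -!EFinB in h1; case: h1 => E.
rewrite !subr0 in E.
have h4 : (4%:R : R) = 4%coqR.
  rewrite -INRE; simpl INR; Lra.lra.
move: E; rewrite -h4 => /(congr1 (fun v => v * 4)).
by rewrite /Rdiv -/(PI / 4) !divfK // pnatr_eq0.
Qed.

Lemma gauss_eq (F : R -> R) :
  (forall t, derivable_pt_lim F t (exp (-(t*t)))%coqR) -> F 0 = 0 ->
  forall x : R, 0 < x -> gauss_integral_proof.integral0_gauss x = F x.
Proof.
move=> HF F0 x x0.
have H t : derivable_pt_lim F t (gauss_fun t).
  by rewrite /gauss_fun -RexpE.RexpE expr2.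
have := @FTC_bridge gauss_fun F 0 x x0 (@continuous_gauss_fun R) H.
rewrite /gauss_integral_proof.integral0_gauss /Rintegral => ->.
by rewrite F0 /= subr0.
Qed.

Lemma four_eq : (4%:R : R) = 4%coqR.
Proof. rewrite -INRE; simpl INR; Lra.lra. Qed.

Lemma gauss_sq_lim (F : R -> R) :
  (forall t, derivable_pt_lim F t (exp (-(t*t)))%coqR) -> F 0 = 0 ->
  forall eps, (0 < eps)%coqR -> exists M, forall x, (M < x)%coqR ->
    (Rabs (F x * F x - PI / 4) < eps)%coqR.
Proof.
move=> HF F0 eps /RltP e0.
have := @gauss_integral_proof.cvg_integral0_gauss_sqr R.
rewrite piE => /cvgrPdist_lt /(_ eps e0) [M [_ HM]].
exists (Rmax M 1%coqR) => x Hx.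
have m1 := Rmax_l M 1%coqR; have m2 := Rmax_r M 1%coqR.
have xM' : (M < x)%coqR by Lra.lra.
have x0' : (0 < x)%coqR by Lra.lra.
have xM : M < x by exact/RltP.
have x0 : 0 < x by exact/RltP.
have := HM x xM.
rewrite (@gauss_eq F HF F0 x x0) distrC expr2 -four_eq.
by move/RltP.
Qed.

End Bridge.

From Coquelicot Require Import Coquelicot.

Lemma gauss_cont x : continuous gauss x.
Proof. unfold gauss. apply (continuous_exp_comp (fun u => - u ^ 2 / 2)). apply (@ex_derive_continuous R_AbsRing R_NormedModule). auto_derive. auto. Qed.

Lemma gauss_ex a b : ex_RInt gauss a b.
Proof. apply (@ex_RInt_continuous R_CompleteNormedModule); intros; apply gauss_cont. Qed.

Definition A (x : R) : R := RInt gauss 0 x.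

Lemma A_deriv x : derivable_pt_lim A x (gauss x).
Proof.
  apply is_derive_Reals. apply (@is_derive_RInt R_NormedModule gauss A 0 x).
  - apply filter_forall. intros y. unfold A. apply (@RInt_correct R_CompleteNormedModule), gauss_ex.
  - apply gauss_cont.
Qed.

Lemma gauss_even u : gauss (- u) = gauss u.
Proof. unfold gauss. f_equal. field. Qed.

Lemma A_odd x : A (- x) = - A x.
Proof.
  unfold A.
  assert (H := RInt_comp_lin gauss (-1) 0 0 x).
  replace (-1 * 0 + 0) with 0 in H by ring.
  replace (-1 * x + 0) with (-x) in H by ring.
  rewrite <- H by apply gauss_ex.
  transitivity (RInt (fun y => - (gauss y)) 0 x).
  { apply RInt_ext. intros y _. unfold scal, opp; simpl; unfold mult; simpl.
    replace (-1*y+0) with (-y) by ring. rewrite gauss_even. ring. }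
  exact (@RInt_opp R_CompleteNormedModule gauss 0 x (gauss_ex 0 x)).
Qed.

Lemma A0 : A 0 = 0.
Proof. unfold A. exact (@RInt_point R_CompleteNormedModule 0 gauss). Qed.

Definition cst_c : R := / sqrt (2 * PI).

Lemma Phi_A x : Phi x = / 2 + cst_c * A x.
Proof. unfold Phi, A, cst_c. rewrite RInt_Reals with (pr := gauss_integrable 0 x). reflexivity. Qed.


Lemma dpl_ext f x l l' : derivable_pt_lim f x l -> l = l' -> derivable_pt_lim f x l'.
Proof. intros H ->; exact H. Qed.

Lemma gauss_pos u : 0 < gauss u.
Proof. unfold gauss; apply exp_pos. Qed.

Lemma A_nonneg y : 0 <= y -> 0 <= A y.
Proof.
  intros Hy. unfold A. apply RInt_ge_0; auto. apply gauss_ex.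
  intros; left; apply gauss_pos.
Qed.

Lemma sqrt2_pos : 0 < sqrt 2.
Proof. apply sqrt_lt_R0; lra. Qed.

Definition Fs (x : R) : R := / sqrt 2 * A (sqrt 2 * x).

Lemma Fs_deriv t : derivable_pt_lim Fs t (exp (- (t * t))).
Proof.
  unfold Fs.
  assert (H1 : derivable_pt_lim (fun x => sqrt 2 * x) t (sqrt 2)).
  { apply dpl_ext with (sqrt 2 * 1). apply derivable_pt_lim_scal with (f := id).
    apply derivable_pt_lim_id. ring. }
  assert (H2 := derivable_pt_lim_comp (fun x => sqrt 2 * x) A t (sqrt 2) _ H1 (A_deriv _)).
  assert (H3 := derivable_pt_lim_scal _ (/ sqrt 2) t _ H2).
  unfold mult_real_fct, comp in H3.
  apply (dpl_ext _ _ _ _ H3).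
  unfold gauss. assert (h := sqrt2_pos). field_simplify; [|lra].
  f_equal. replace ((sqrt 2 * t)^2) with (sqrt 2 * sqrt 2 * (t * t)) by ring.
  rewrite sqrt_sqrt by lra. field.
Qed.

Lemma Fs0 : Fs 0 = 0.
Proof. unfold Fs. rewrite Rmult_0_r, A0. ring. Qed.

Lemma A_lim : forall eps, 0 < eps -> exists M, forall y, M < y -> Rabs (/2 - cst_c * A y) < eps.
Proof.
  intros eps He.
  assert (HPI := PI_RGT_0).
  set (r := sqrt PI).
  assert (Hr : 0 < r) by (apply sqrt_lt_R0; lra).
  assert (Hrr : r * r = PI) by (apply sqrt_sqrt; lra).
  assert (Hs2 := sqrt2_pos).
  assert (Hs22 : sqrt 2 * sqrt 2 = 2) by (apply sqrt_sqrt; lra).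
  destruct (Bridge.gauss_sq_lim Fs Fs_deriv Fs0 (eps * PI / 2)) as [M HM].
  { apply Rmult_lt_0_compat; [apply Rmult_lt_0_compat|]; lra. }
  exists (Rmax 0 (sqrt 2 * M)). intros y Hy.
  assert (m1 := Rmax_l 0 (sqrt 2 * M)). assert (m2 := Rmax_r 0 (sqrt 2 * M)).
  set (x := y / sqrt 2).
  assert (Hyx : y = sqrt 2 * x) by (unfold x; field; lra).
  assert (HxM : M < x).
  { apply Rmult_lt_reg_l with (sqrt 2); lra. }
  assert (Hx0 : 0 <= x).
  { unfold x. apply Rmult_le_pos; [lra| left; apply Rinv_0_lt_compat; lra]. }
  specialize (HM x HxM).
  set (F := Fs x) in *.
  assert (HF : 0 <= F).
  { unfold F, Fs. apply Rmult_le_pos. left; apply Rinv_0_lt_compat; lra.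
    apply A_nonneg. apply Rmult_le_pos; lra. }
  assert (Hc : cst_c * A y = F / r).
  { unfold F, Fs, cst_c, r. rewrite <- Hyx. rewrite sqrt_mult by lra. field. split; apply Rgt_not_eq; assumption. }
  rewrite Hc.
  assert (E1 : / 2 - F / r = (r / 2 - F) / r) by (field; lra).
  rewrite E1. unfold Rdiv at 1. rewrite Rabs_mult, (Rabs_pos_eq (/ r)) by (left; apply Rinv_0_lt_compat; lra).
  assert (E2 : Rabs (r / 2 - F) * (r / 2 + F) = Rabs (F * F - PI / 4)).
  { rewrite <- (Rabs_pos_eq (r / 2 + F)) by lra. rewrite <- Rabs_mult.
    rewrite <- Rabs_Ropp. f_equal. rewrite <- Hrr. field. }
  assert (Ha : 0 <= Rabs (r / 2 - F)) by apply Rabs_pos.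
  assert (E3 : Rabs (r / 2 - F) * (r / 2) <= Rabs (F * F - PI / 4)).
  { rewrite <- E2. apply Rmult_le_compat_l; lra. }
  apply Rmult_lt_reg_r with (r * (r / 2)). nra.
  replace (Rabs (r / 2 - F) * / r * (r * (r / 2))) with (Rabs (r / 2 - F) * (r / 2)) by (field; lra).
  replace (eps * (r * (r / 2))) with (eps * PI / 2) by (rewrite <- Hrr; field).
  lra.
Qed.

Definition Q (y : R) : R := Phi (- y).
Definition phi (y : R) : R := cst_c * gauss y.

Lemma cst_c_pos : 0 < cst_c.
Proof. unfold cst_c. apply Rinv_0_lt_compat, sqrt_lt_R0. assert (H := PI_RGT_0). lra. Qed.

Lemma phi_pos y : 0 < phi y.
Proof. unfold phi. apply Rmult_lt_0_compat. apply cst_c_pos. apply gauss_pos. Qed.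

Lemma Q_A y : Q y = / 2 - cst_c * A y.
Proof. unfold Q. rewrite Phi_A, A_odd. ring. Qed.

Lemma Q_deriv y : derivable_pt_lim Q y (- phi y).
Proof.
  apply dpl_ext with (0 - cst_c * gauss y).
  - assert (H : derivable_pt_lim (fun y => / 2 - cst_c * A y) y (0 - cst_c * gauss y)).
    { apply derivable_pt_lim_minus. apply derivable_pt_lim_const.
      apply derivable_pt_lim_scal. apply A_deriv. }
    intros e He. destruct (H e He) as [d Hd]. exists d. intros h H1 H2.
    rewrite !Q_A. apply Hd; auto.
  - unfold phi; ring.
Qed.

Lemma Q_lim : forall eps, 0 < eps -> exists M, forall y, M < y -> Rabs (Q y) < eps.
Proof.
  intros eps He. destruct (A_lim eps He) as [M HM]. exists M. intros y Hy.
  rewrite Q_A. apply HM; auto.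
Qed.

Lemma Q_sym y : Q (- y) = 1 - Q y.
Proof. rewrite !Q_A, A_odd. field. Qed.

Lemma Q_dec y1 y2 : y1 < y2 -> Q y2 < Q y1.
Proof.
  intros H. destruct (MVT_cor2 Q (fun y => - phi y) y1 y2 H) as [c [Hc _]].
  { intros; apply Q_deriv. }
  assert (P := phi_pos c). nra.
Qed.

Lemma Q_decle y1 y2 : y1 <= y2 -> Q y2 <= Q y1.
Proof. intros [H|H]. left; apply Q_dec; auto. subst; lra. Qed.

Lemma dec_zero_nonneg (f f' : R -> R) (a : R) :
  (forall t, a < t -> derivable_pt_lim f t (f' t)) ->
  (forall t, a < t -> f' t <= 0) ->
  (forall eps, 0 < eps -> exists M, forall y, M < y -> Rabs (f y) < eps) ->
  forall y, a < y -> 0 <= f y.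
Proof.
  intros Hd Hn Hl y Hy.
  destruct (Rle_or_lt 0 (f y)) as [h|h]; auto. exfalso.
  destruct (Hl (- f y)) as [M HM]; [lra|].
  set (Y := Rmax (y + 1) (M + 1)).
  assert (m1 := Rmax_l (y + 1) (M + 1)). assert (m2 := Rmax_r (y + 1) (M + 1)).
  fold Y in m1, m2.
  destruct (MVT_cor2 f f' y Y) as [c [Hc Hc2]]; [lra| |].
  { intros; apply Hd; lra. }
  assert (Hc3 := Hn c ltac:(lra)).
  assert (f Y - f y <= 0) by (rewrite Hc; nra).
  specialize (HM Y ltac:(lra)).
  unfold Rabs in HM. destruct (Rcase_abs (f Y)); lra.
Qed.

Lemma Q_nonneg y : 0 <= Q y.
Proof.
  destruct (Rle_or_lt 0 (Q y)) as [h|h]; auto. exfalso.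
  assert (H := dec_zero_nonneg Q (fun y => - phi y) (y - 1)).
  assert (0 <= Q y). apply H; try lra.
  - intros; apply Q_deriv.
  - intros t _. assert (P := phi_pos t). lra.
  - apply Q_lim.
  - lra.
Qed.

Lemma Q_pos y : 0 < Q y.
Proof. assert (H := Q_dec y (y + 1) ltac:(lra)). assert (H2 := Q_nonneg (y + 1)). lra. Qed.

Lemma Q_lt1 y : Q y < 1.
Proof. assert (H := Q_pos (- y)). rewrite Q_sym in H. lra. Qed.

Lemma Q0 : Q 0 = / 2.
Proof. rewrite Q_A, A0. ring. Qed.

Lemma exp_le_mono x y : x <= y -> exp x <= exp y.
Proof. intros [H|H]. left; apply exp_increasing; auto. subst; lra. Qed.

Lemma gauss_le1 y : gauss y <= 1.
Proof. unfold gauss. rewrite <- exp_0. apply exp_le_mono. assert (0 <= y^2) by (apply pow2_ge_0). lra. Qed.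

Lemma phi_le y : phi y <= cst_c.
Proof. unfold phi. assert (H := gauss_le1 y). assert (H2 := cst_c_pos). nra. Qed.

Lemma phi_deriv t : derivable_pt_lim phi t (- t * phi t).
Proof.
  apply is_derive_Reals. unfold phi, gauss. auto_derive. auto. replace (- t ^ 2 / 2) with (- (t * (t * 1)) * / 2) by (unfold Rdiv; ring). field.
Qed.

Lemma mills_upper y : 0 < y -> Q y <= phi y / y.
Proof.
  intros Hy.
  assert (H := dec_zero_nonneg (fun t => phi t / t - Q t) (fun t => - phi t / (t * t)) 0).
  cut (0 <= phi y / y - Q y). lra.
  apply H; auto.
  - intros t Ht.
    assert (D : derivable_pt_lim (minus_fct (div_fct phi id) Q) t
       ((( - t * phi t) * id t - 1 * phi t) / (id t)² - - phi t)).
    { apply derivable_pt_lim_minus. apply derivable_pt_lim_div.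
      apply phi_deriv. apply derivable_pt_lim_id. unfold id; lra. apply Q_deriv. }
    apply (dpl_ext _ _ _ _ D). unfold id, Rsqr. field. lra.
  - intros t Ht. assert (P := phi_pos t). unfold Rdiv.
    assert (0 < / (t * t)) by (apply Rinv_0_lt_compat; nra). nra.
  - intros eps He.
    destruct (Q_lim (eps / 2)) as [M HM]; [lra|].
    assert (Hc := cst_c_pos).
    exists (Rmax M (Rmax 1 (2 * cst_c / eps))). intros Y HY.
    assert (m1 := Rmax_l M (Rmax 1 (2 * cst_c / eps))).
    assert (m2 := Rmax_r M (Rmax 1 (2 * cst_c / eps))).
    assert (m3 := Rmax_l 1 (2 * cst_c / eps)).
    assert (m4 := Rmax_r 1 (2 * cst_c / eps)).
    specialize (HM Y ltac:(lra)).
    assert (HY0 : 0 < Y) by lra.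
    assert (P1 : 0 < phi Y / Y) by (apply Rdiv_lt_0_compat; [apply phi_pos|lra]).
    assert (P2 : phi Y / Y < eps / 2).
    { apply Rmult_lt_reg_r with Y; auto. unfold Rdiv at 1. rewrite Rmult_assoc, Rinv_l by lra.
      assert (T := phi_le Y).
      assert (2 * cst_c / eps < Y) by lra.
      assert (cst_c * 2 < Y * eps).
      { apply Rmult_lt_reg_r with (/ eps). apply Rinv_0_lt_compat; lra.
        replace (Y * eps * / eps) with Y by (field; lra). unfold Rdiv in *. lra. }
      lra. }
    unfold Rabs in *. destruct (Rcase_abs (phi Y / Y - Q Y)); destruct (Rcase_abs (Q Y)); lra.
Qed.

Lemma mills_lower y : 0 < y -> y * phi y / (1 + y * y) <= Q y.
Proof.
  intros Hy.
  assert (H := dec_zero_nonneg (fun t => Q t - t * phi t / (1 + t * t))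
                 (fun t => - 2 * phi t / ((1 + t * t) * (1 + t * t))) 0).
  cut (0 <= Q y - y * phi y / (1 + y * y)). lra.
  apply H; auto.
  - intros t Ht.
    assert (D1 : derivable_pt_lim (fun t => 1 + t * t) t (2 * t)).
    { apply is_derive_Reals. auto_derive. auto. ring. }
    assert (D2 : derivable_pt_lim (mult_fct id phi) t (1 * phi t + id t * (- t * phi t))).
    { apply derivable_pt_lim_mult. apply derivable_pt_lim_id. apply phi_deriv. }
    eapply dpl_ext.
    { change (fun t0 : R => Q t0 - t0 * phi t0 / (1 + t0 * t0)) with
        (minus_fct Q (div_fct (mult_fct id phi) (fun t => 1 + t * t))).
      apply derivable_pt_lim_minus. apply Q_deriv. apply derivable_pt_lim_div; [exact D2|exact D1|].
      assert (0 <= t * t) by nra. lra. }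
    unfold id, Rsqr, mult_fct. field. assert (0 <= t * t) by nra. lra.
  - intros t Ht. assert (P := phi_pos t). unfold Rdiv.
    assert (0 < / ((1 + t * t) * (1 + t * t))).
    { apply Rinv_0_lt_compat. assert (0 <= t * t) by nra. nra. }
    nra.
  - intros eps He.
    destruct (Q_lim (eps / 2)) as [M HM]; [lra|].
    assert (Hc := cst_c_pos).
    exists (Rmax M (Rmax 1 (2 * cst_c / eps))). intros Y HY.
    assert (m1 := Rmax_l M (Rmax 1 (2 * cst_c / eps))).
    assert (m2 := Rmax_r M (Rmax 1 (2 * cst_c / eps))).
    assert (m3 := Rmax_l 1 (2 * cst_c / eps)).
    assert (m4 := Rmax_r 1 (2 * cst_c / eps)).
    specialize (HM Y ltac:(lra)).
    assert (HY0 : 0 < Y) by lra.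
    assert (P1 : 0 < Y * phi Y / (1 + Y * Y)).
    { apply Rdiv_lt_0_compat. apply Rmult_lt_0_compat; [lra|apply phi_pos]. nra. }
    assert (P2 : Y * phi Y / (1 + Y * Y) < eps / 2).
    { assert (T := phi_le Y). assert (Tp := phi_pos Y).
      assert (2 * cst_c / eps < Y) by lra.
      assert (cst_c * 2 < Y * eps).
      { apply Rmult_lt_reg_r with (/ eps). apply Rinv_0_lt_compat; lra.
        replace (Y * eps * / eps) with Y by (field; lra). unfold Rdiv in *. lra. }
      apply Rmult_lt_reg_r with (1 + Y * Y). nra.
      unfold Rdiv. rewrite Rmult_assoc, Rinv_l by nra. nra. }
    unfold Rabs in *. destruct (Rcase_abs (Q Y - Y * phi Y / (1 + Y * Y))); destruct (Rcase_abs (Q Y)); lra.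
Qed.


Lemma exp_le_inv x y : exp x <= exp y -> x <= y.
Proof. intros H. destruct (Rle_or_lt x y); auto. assert (exp y < exp x) by (apply exp_increasing; auto). lra. Qed.

Lemma ln_le_mono x y : 0 < x -> x <= y -> ln x <= ln y.
Proof. intros Hx [H|H]. left; apply ln_increasing; auto. subst; lra. Qed.

Lemma ln_le_sub1 x : 0 < x -> ln x <= x - 1.
Proof.
  intros Hx. apply exp_le_inv. rewrite exp_ln by auto.
  assert (H := exp_ineq1_le (x - 1)). lra.
Qed.

Lemma exp_ge1 x : 0 <= x -> 1 <= exp x.
Proof. intros H. assert (I := exp_ineq1_le x). lra. Qed.

Lemma exp_le1 x : x <= 0 -> exp x <= 1.
Proof. intros H. rewrite <- exp_0. apply exp_le_mono. lra. Qed.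

Lemma ln_ge_0 x : 1 <= x -> 0 <= ln x.
Proof. intros H. rewrite <- ln_1. apply ln_le_mono; lra. Qed.

Lemma expm1_le z : exp z - 1 <= z * exp z.
Proof.
  assert (H := exp_ineq1_le (- z)). assert (E := exp_pos z).
  assert (exp (- z) * exp z = 1) by (rewrite <- exp_plus; replace (- z + z) with 0 by ring; apply exp_0).
  nra.
Qed.

Lemma quad_bound al be ga y : 0 < al -> - al * y * y + be * y + ga <= ga + be * be / (4 * al).
Proof.
  intros H. assert (S : 0 <= (2 * al * y - be) * (2 * al * y - be) / (4 * al)).
  { apply Rmult_le_pos. apply Rle_0_sqr. left; apply Rinv_0_lt_compat; lra. }
  assert (E : ga + be * be / (4 * al) - (- al * y * y + be * y + ga) = (2 * al * y - be) * (2 * al * y - be) / (4 * al)) by (field; lra).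
  lra.
Qed.

Section Dyn.
Variables a b : R.
Hypothesis Ha : 0 < a.
Hypothesis Hb : 0 < b.
Hypothesis Hab : a * b = / 2.

Definition gf (l : R) := Q (a * l + b).
Definition hf (l : R) := Q (a * l - b).
Definition Dp (l : R) := ln ((1 - gf l) / (1 - hf l)).

Fixpoint ell (n : nat) : R :=
  match n with O => 0 | S n => ell n + Dp (ell n) end.

Definition yy (n : nat) := a * ell n + b.

Lemma hf_ge_gf l : gf l <= hf l.
Proof. unfold gf, hf. apply Q_decle. lra. Qed.

Lemma Dp_nonneg l : 0 <= Dp l.
Proof.
  unfold Dp. apply ln_ge_0. assert (H := hf_ge_gf l). assert (H2 := Q_lt1 (a * l - b)).
  unfold hf in *. apply Rmult_le_reg_r with (1 - Q (a * l - b)). lra.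
  unfold Rdiv. rewrite Rmult_assoc, Rinv_l by lra. lra.
Qed.

Lemma ell_nonneg n : 0 <= ell n.
Proof. induction n; simpl. lra. assert (H := Dp_nonneg (ell n)). lra. Qed.

Lemma yy_ge_b n : b <= yy n.
Proof. unfold yy. assert (H := ell_nonneg n). nra. Qed.

Lemma yy_S n : yy (S n) = yy n + a * Dp (ell n).
Proof. unfold yy; simpl. ring. Qed.

Lemma Dp_lower l : hf l - gf l <= Dp l.
Proof.
  unfold Dp. assert (H := hf_ge_gf l). assert (H1 := Q_pos (a * l + b)). assert (H2 := Q_lt1 (a * l + b)).
  assert (H3 := Q_lt1 (a * l - b)). unfold gf, hf in *.
  set (g := Q (a * l + b)) in *. set (h := Q (a * l - b)) in *.
  assert (E : (1 - g) / (1 - h) = / ((1 - h) / (1 - g))) by (field; lra).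
  rewrite E, ln_Rinv by (apply Rdiv_lt_0_compat; lra).
  assert (L := ln_le_sub1 ((1 - h) / (1 - g)) ltac:(apply Rdiv_lt_0_compat; lra)).
  assert (E2 : (1 - h) / (1 - g) - 1 = - ((h - g) / (1 - g))) by (field; lra).
  rewrite E2 in L.
  assert (h - g <= (h - g) / (1 - g)).
  { apply Rmult_le_reg_r with (1 - g). lra. unfold Rdiv. rewrite Rmult_assoc, Rinv_l by lra. nra. }
  lra.
Qed.

Lemma phi_mono u v : Rabs u <= Rabs v -> phi v <= phi u.
Proof.
  intros H. unfold phi, gauss. apply Rmult_le_compat_l. left; apply cst_c_pos.
  apply exp_le_mono. assert (u ^ 2 <= v ^ 2).
  { rewrite <- (pow2_abs u), <- (pow2_abs v). assert (0 <= Rabs u) by apply Rabs_pos. nra. }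
  lra.
Qed.

Lemma hg_diff n : phi (yy n) <= a * (hf (ell n) - gf (ell n)).
Proof.
  assert (Hy := yy_ge_b n). unfold hf, gf. fold (yy n).
  replace (a * ell n - b) with (yy n - 2 * b) by (unfold yy; ring).
  destruct (MVT_cor2 Q (fun y => - phi y) (yy n - 2 * b) (yy n)) as [c [Hc Hc2]]; [lra| |].
  { intros; apply Q_deriv. }
  assert (P : phi (yy n) <= phi c).
  { apply phi_mono. rewrite (Rabs_pos_eq (yy n)) by lra. unfold Rabs. destruct (Rcase_abs c); lra. }
  assert (E : Q (yy n - 2 * b) - Q (yy n) = phi c * (2 * b)).
  { replace (phi c * (2 * b)) with (- (- phi c * (yy n - (yy n - 2 * b)))) by ring. rewrite <- Hc. ring. }
  rewrite E. replace (a * (phi c * (2 * b))) with (phi c * (2 * (a * b))) by ring.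
  rewrite Hab. lra.
Qed.

Definition UU (y : R) := exp (y * y / 2).

Lemma phi_UU y : phi y * UU y = cst_c.
Proof.
  unfold phi, gauss, UU. rewrite Rmult_assoc, <- exp_plus.
  replace (- y ^ 2 / 2 + y * y / 2) with 0 by field. rewrite exp_0. ring.
Qed.

Lemma UU_step n : UU (yy n) + b * cst_c <= UU (yy (S n)).
Proof.
  rewrite yy_S. set (y := yy n). set (D := a * Dp (ell n)).
  assert (Hy : b <= y) by apply yy_ge_b.
  assert (HD : phi y <= D).
  { unfold D. assert (H := hg_diff n). assert (H2 := Dp_lower (ell n)). fold y in H. nra. }
  assert (HD0 : 0 <= D) by (assert (H := phi_pos y); lra).
  assert (E : UU (y + D) = UU y * exp (y * D + D * D / 2)).
  { unfold UU. rewrite <- exp_plus. f_equal. field. }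
  rewrite E.
  assert (I := exp_ineq1_le (y * D + D * D / 2)).
  assert (U0 : 0 < UU y) by apply exp_pos.
  assert (PU := phi_UU y).
  assert (UU y * (y * D) >= b * cst_c).
  { assert (0 <= (D - phi y) * UU y) by (apply Rmult_le_pos; lra).
    assert (UU y * D >= cst_c) by lra.
    assert (Cp := cst_c_pos).
    assert (0 <= (y - b) * (UU y * D)) by (apply Rmult_le_pos; lra).
    assert (0 <= b * (UU y * D - cst_c)) by (apply Rmult_le_pos; lra).
    lra. }
  assert (0 <= D * D / 2) by (unfold Rdiv; assert (0 <= D * D) by nra; lra).
  nra.
Qed.

Lemma UU_lower n : INR n * (b * cst_c) <= UU (yy n).
Proof.
  induction n.
  - simpl. assert (H := exp_pos (yy 0 * yy 0 / 2)). unfold UU. lra.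
  - rewrite S_INR. assert (H := UU_step n). lra.
Qed.


Lemma gf_le_half n : gf (ell n) <= / 2.
Proof. unfold gf. fold (yy n). rewrite <- Q0. apply Q_decle. assert (H := yy_ge_b n). lra. Qed.

Lemma gf_pos n : 0 < gf (ell n).
Proof. apply Q_pos. Qed.

Lemma g_small d2 : 0 < d2 -> exists n0 : nat, forall n : nat, (n0 <= n)%nat ->
  gf (ell n) <= d2 / (4 * (INR n + 1)).
Proof.
  intros Hd.
  set (Y := 8 / (b * d2)).
  assert (HY : 0 < Y) by (unfold Y; apply Rdiv_lt_0_compat; nra).
  assert (Hc := cst_c_pos).
  destruct (INR_unbounded (Rmax 1 (UU Y / (b * cst_c)))) as [n0 Hn0].
  assert (m1 := Rmax_l 1 (UU Y / (b * cst_c))). assert (m2 := Rmax_r 1 (UU Y / (b * cst_c))).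
  exists n0. intros n Hn.
  assert (Hn' : INR n0 <= INR n) by (apply le_INR; auto).
  assert (Hn1 : 1 <= INR n) by lra.
  assert (HU : UU Y <= UU (yy n)).
  { assert (H := UU_lower n).
    assert (UU Y / (b * cst_c) * (b * cst_c) = UU Y) by (field; lra).
    assert (UU Y / (b * cst_c) * (b * cst_c) <= INR n * (b * cst_c)).
    { apply Rmult_le_compat_r. nra. lra. }
    lra. }
  assert (Hy := yy_ge_b n). set (y := yy n) in *.
  assert (HyY : Y <= y).
  { apply exp_le_inv in HU. nra. }
  unfold gf. fold (yy n). fold y.
  assert (Hm := mills_upper y ltac:(lra)).
  assert (PU := phi_UU y).
  assert (HU2 : INR n * (b * cst_c) <= UU y) by apply UU_lower.
  assert (E : phi y / y = cst_c / (UU y * y)).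
  { assert (0 < UU y) by apply exp_pos. rewrite <- PU. field. split; lra. }
  assert (L : cst_c / (UU y * y) <= cst_c / (INR n * (b * cst_c) * Y)).
  { assert (P1 : 0 < INR n * (b * cst_c)) by (apply Rmult_lt_0_compat; [lra| apply Rmult_lt_0_compat; lra]).
    apply Rmult_le_compat_l. lra. apply Rinv_le_contravar. apply Rmult_lt_0_compat; lra.
    apply Rmult_le_compat; lra. }
  assert (E2 : cst_c / (INR n * (b * cst_c) * Y) = d2 / (8 * INR n)).
  { unfold Y. field. nra. }
  assert (L2 : d2 / (8 * INR n) <= d2 / (4 * (INR n + 1))).
  { apply Rmult_le_compat_l. lra. apply Rinv_le_contravar; nra. }
  lra.
Qed.

Fixpoint prodf (j m : nat) : R :=
  match m with O => 1 | S m => (1 - gf (ell j)) * prodf (S j) m end.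

Lemma prodf_S j m : prodf j (S m) = prodf j m * (1 - gf (ell (j + m))).
Proof.
  revert j. induction m; intros j.
  - simpl. rewrite Nat.add_0_r. ring.
  - change (prodf j (S (S m))) with ((1 - gf (ell j)) * prodf (S j) (S m)).
    rewrite IHm. change (prodf j (S m)) with ((1 - gf (ell j)) * prodf (S j) m).
    replace (S j + m)%nat with (j + S m)%nat by lia. ring.
Qed.

Lemma prodf_pos j m : 0 < prodf j m.
Proof.
  revert j. induction m; intros j; simpl. lra.
  apply Rmult_lt_0_compat; auto. assert (H := Q_lt1 (a * ell j + b)). unfold gf. lra.
Qed.

Lemma prodf_dec m k : (m <= k)%nat -> prodf 0 k <= prodf 0 m.
Proof.
  induction 1. lra. rewrite prodf_S. assert (H1 := prodf_pos 0 m0).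
  assert (H2 := gf_pos (0 + m0)). assert (H3 := gf_le_half (0 + m0)). nra.
Qed.

Lemma one_minus_ge_exp g : 0 <= g <= / 2 -> exp (- (2 * g)) <= 1 - g.
Proof.
  intros [H1 H2]. assert (I := exp_ineq1_le (2 * g)).
  assert (E : exp (- (2 * g)) * exp (2 * g) = 1).
  { rewrite <- exp_plus. replace (- (2 * g) + 2 * g) with 0 by ring. apply exp_0. }
  assert (P := exp_pos (- (2 * g))).
  assert (exp (- (2 * g)) * (1 + 2 * g) <= 1) by nra.
  assert ((1 - g) * (1 + 2 * g) >= 1) by nra.
  nra.
Qed.

Lemma ln_step (x : R) : 0 <= x -> / (2 * (x + 1)) <= ln (x + 2) - ln (x + 1).
Proof.
  intros Hx.
  assert (L := ln_le_sub1 ((x + 1) / (x + 2)) ltac:(apply Rdiv_lt_0_compat; lra)).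
  unfold Rdiv in L. rewrite ln_mult, ln_Rinv in L by (try apply Rinv_0_lt_compat; lra).
  assert (E : (x + 1) * / (x + 2) - 1 = - / (x + 2)) by (field; lra).
  rewrite E in L.
  assert (/ (2 * (x + 1)) <= / (x + 2)) by (apply Rinv_le_contravar; lra).
  lra.
Qed.

Lemma prod_lower d2 : 0 < d2 -> exists k1, 0 < k1 /\ forall m : nat,
  k1 * exp (- (d2 * ln (INR m + 1))) <= prodf 0 m.
Proof.
  intros Hd. destruct (g_small d2 Hd) as [n0 Hn0].
  exists (prodf 0 n0). split. apply prodf_pos.
  set (W := fun m => prodf 0 m * exp (d2 * ln (INR m + 1))).
  assert (WE : forall m, prodf 0 m = W m * exp (- (d2 * ln (INR m + 1)))).
  { intros m. unfold W. rewrite Rmult_assoc, <- exp_plus.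
    replace (d2 * ln (INR m + 1) + - (d2 * ln (INR m + 1))) with 0 by ring. rewrite exp_0; ring. }
  assert (Wge : forall m, prodf 0 m <= W m).
  { intros m. unfold W; cbv beta. assert (H := prodf_pos 0 m).
    assert (1 <= exp (d2 * ln (INR m + 1))).
    { apply exp_ge1. apply Rmult_le_pos. lra. apply ln_ge_0.
      assert (H2 := pos_INR m). lra. }
    nra. }
  assert (Wmono : forall m, (n0 <= m)%nat -> prodf 0 n0 <= W m).
  { induction 1. apply Wge.
    assert (S1 : W m <= W (S m)).
    { unfold W. rewrite prodf_S. simpl (0 + m)%nat.
      assert (G := Hn0 m H). assert (Gp := gf_pos m). assert (Gh := gf_le_half m).
      assert (O := one_minus_ge_exp (gf (ell m)) ltac:(lra)).
      rewrite S_INR. replace (INR m + 1 + 1) with (INR m + 2) by ring.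
      assert (Hm0 := pos_INR m).
      assert (LS := ln_step (INR m) Hm0).
      assert (Pp := prodf_pos 0 m).
      assert (K : exp (d2 * ln (INR m + 1)) <= (1 - gf (ell m)) * exp (d2 * ln (INR m + 2))).
      { apply Rle_trans with (exp (- (2 * gf (ell m))) * exp (d2 * ln (INR m + 2))).
        - rewrite <- exp_plus. apply exp_le_mono.
          assert (2 * gf (ell m) <= d2 * / (2 * (INR m + 1))).
          { unfold Rdiv in G. replace (d2 * / (2 * (INR m + 1))) with (2 * (d2 * / (4 * (INR m + 1)))) by (field; lra). lra. }
          assert (d2 * / (2 * (INR m + 1)) <= d2 * (ln (INR m + 2) - ln (INR m + 1))) by (apply Rmult_le_compat_l; lra).
          nra.
        - apply Rmult_le_compat_r. left; apply exp_pos. auto. }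
      rewrite Rmult_assoc. apply Rmult_le_compat_l. lra. lra. }
    lra. }
  intros m.
  destruct (Compare_dec.le_lt_dec n0 m) as [H|H].
  - rewrite (WE m). apply Rmult_le_compat_r. left; apply exp_pos. apply Wmono; auto.
  - assert (H1 := prodf_dec m n0 ltac:(lia)).
    assert (exp (- (d2 * ln (INR m + 1))) <= 1).
    { apply exp_le1. assert (0 <= d2 * ln (INR m + 1)).
      apply Rmult_le_pos. lra. apply ln_ge_0. assert (H2 := pos_INR m). lra. lra. }
    assert (Pp := prodf_pos 0 n0). nra.
Qed.


Lemma Q_lower_exp d : 0 < d -> exists k2, 0 < k2 /\ forall y, 0 <= y ->
  k2 * exp (- ((1 + d) * (y * y) / 2)) <= Q y.
Proof.
  intros Hd. set (Cd := 1 + 2 / d).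
  assert (HCd : 1 <= Cd) by (unfold Cd; assert (0 < 2 / d) by (apply Rdiv_lt_0_compat; lra); lra).
  assert (Hc := cst_c_pos). assert (Q1 := Q_pos 1).
  exists (Rmin (Q 1) (cst_c / Cd)). split.
  { apply Rmin_glb_lt; auto. apply Rdiv_lt_0_compat; lra. }
  intros y Hy.
  assert (m1 := Rmin_l (Q 1) (cst_c / Cd)). assert (m2 := Rmin_r (Q 1) (cst_c / Cd)).
  assert (Ep : exp (- ((1 + d) * (y * y) / 2)) <= 1).
  { apply exp_le1. assert (0 <= y * y) by nra. assert (0 <= (1 + d) * (y * y)) by nra. lra. }
  assert (Ep0 := exp_pos (- ((1 + d) * (y * y) / 2))).
  assert (Mp : 0 < Rmin (Q 1) (cst_c / Cd)) by (apply Rmin_glb_lt; auto; apply Rdiv_lt_0_compat; lra).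
  destruct (Rle_or_lt 1 y) as [H1|H1].
  - assert (ML := mills_lower y ltac:(lra)).
    assert (I := exp_ineq1_le (d * (y * y) / 2)).
    assert (A1 : 1 + y * y <= Cd * exp (d * (y * y) / 2)).
    { assert (1 + y * y <= Cd * (1 + d * (y * y) / 2)).
      { unfold Cd. assert (E : (1 + 2 / d) * (1 + d * (y * y) / 2) = 1 + d * (y * y) / 2 + 2 / d + y * y) by (field; lra).
        rewrite E. assert (0 < 2 / d) by (apply Rdiv_lt_0_compat; lra). assert (0 <= d * (y * y) / 2).
        { unfold Rdiv. apply Rmult_le_pos. nra. lra. } lra. }
      nra. }
    assert (Ephi : phi y = cst_c * exp (- (y * y) / 2)).
    { unfold phi, gauss. f_equal. f_equal. field. }
    assert (Esplit : exp (- ((1 + d) * (y * y) / 2)) * exp (d * (y * y) / 2) = exp (- (y * y) / 2)).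
    { rewrite <- exp_plus. f_equal. field. }
    assert (Ey := exp_pos (d * (y * y) / 2)).
    assert (Ey2 := exp_pos (- (y * y) / 2)).
    (* Q y >= y * phi y / (1 + y*y) >= cst_c/Cd * exp(-(1+d) y^2/2) *)
    apply Rle_trans with (y * phi y / (1 + y * y)); auto.
    apply Rle_trans with (cst_c / Cd * exp (- ((1 + d) * (y * y) / 2))).
    { apply Rmult_le_compat_r; lra. }
    apply Rmult_le_reg_r with ((1 + y * y) * Cd). nra.
    replace (y * phi y / (1 + y * y) * ((1 + y * y) * Cd)) with (y * phi y * Cd) by (field; nra).
    replace (cst_c / Cd * exp (- ((1 + d) * (y * y) / 2)) * ((1 + y * y) * Cd)) with
        (cst_c * exp (- ((1 + d) * (y * y) / 2)) * (1 + y * y)) by (field; lra).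
    rewrite Ephi.
    assert (cst_c * exp (- ((1 + d) * (y * y) / 2)) * (1 + y * y) <= cst_c * exp (- (y * y) / 2) * Cd).
    { rewrite <- Esplit. assert (0 < cst_c * exp (- ((1 + d) * (y * y) / 2))) by (apply Rmult_lt_0_compat; lra).
      replace (cst_c * (exp (- ((1 + d) * (y * y) / 2)) * exp (d * (y * y) / 2)) * Cd) with
        (cst_c * exp (- ((1 + d) * (y * y) / 2)) * (Cd * exp (d * (y * y) / 2))) by ring.
      apply Rmult_le_compat_l; lra. }
    assert (0 <= cst_c * exp (- (y * y) / 2) * Cd) by (apply Rmult_le_pos; [apply Rmult_le_pos|]; lra).
    nra.
  - assert (Q 1 <= Q y) by (apply Q_decle; lra). nra.
Qed.

Lemma Dp_upper l : 0 <= l -> Dp l <= hf l / Q b.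
Proof.
  intros Hl. unfold Dp.
  assert (H := hf_ge_gf l). assert (H1 := Q_pos (a * l + b)). assert (H2 := Q_lt1 (a * l + b)).
  assert (H3 := Q_lt1 (a * l - b)). assert (H4 := Q_pos (a * l - b)). unfold gf, hf in *.
  set (g := Q (a * l + b)) in *. set (h := Q (a * l - b)) in *.
  assert (Hqb : h <= 1 - Q b). { rewrite <- Q_sym. apply Q_decle. nra. }
  assert (Qb := Q_pos b).
  assert (L := ln_le_sub1 ((1 - g) / (1 - h)) ltac:(apply Rdiv_lt_0_compat; lra)).
  assert (E : (1 - g) / (1 - h) - 1 = (h - g) / (1 - h)) by (field; lra).
  rewrite E in L.
  assert ((h - g) / (1 - h) <= h / Q b).
  { apply Rmult_le_reg_r with ((1 - h) * Q b). nra.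
    replace ((h - g) / (1 - h) * ((1 - h) * Q b)) with ((h - g) * Q b) by (field; lra).
    replace (h / Q b * ((1 - h) * Q b)) with (h * (1 - h)) by (field; lra). nra. }
  lra.
Qed.


Section Pot.
Variable d : R.
Hypothesis Hd : 0 < d.

Definition pp := / (1 + d).
Definition VV (y : R) := exp (pp * (y * y) / 2).
Definition M0 := a / Q b.

Lemma pp_bounds : 0 < pp < 1.
Proof. unfold pp. split. apply Rinv_0_lt_compat; lra. rewrite <- Rinv_1. apply Rinv_lt_contravar; lra. Qed.

Lemma M0_pos : 0 < M0.
Proof. unfold M0. apply Rdiv_lt_0_compat; auto. apply Q_pos. Qed.

Lemma Delta_bounds n : 0 <= a * Dp (ell n) /\ a * Dp (ell n) <= M0 /\
   a * Dp (ell n) <= M0 * hf (ell n).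
Proof.
  assert (H0 := Dp_nonneg (ell n)). assert (H1 := Dp_upper (ell n) (ell_nonneg n)).
  assert (Qb := Q_pos b). assert (Hh := Q_lt1 (a * ell n - b)). assert (Hh0 := Q_pos (a * ell n - b)).
  unfold hf in *. unfold M0.
  assert (E : a / Q b * Q (a * ell n - b) = a * (Q (a * ell n - b) / Q b)) by (field; lra).
  split; [nra|split].
  - assert (Q (a * ell n - b) / Q b <= / Q b).
    { unfold Rdiv. assert (0 < / Q b) by (apply Rinv_0_lt_compat; lra). nra. }
    unfold Rdiv in *. nra.
  - rewrite E. nra.
Qed.

Lemma VV_mono y1 y2 : 0 <= y1 <= y2 -> VV y1 <= VV y2.
Proof.
  intros H. unfold VV. apply exp_le_mono. assert (P := pp_bounds).
  assert (y1 * y1 <= y2 * y2) by nra. unfold Rdiv. nra.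
Qed.

Lemma VV_incr y D : 0 <= y -> 0 <= D <= M0 -> VV (y + D) - VV y <= D * (y + M0) * VV (y + M0).
Proof.
  intros Hy HD. assert (P := pp_bounds).
  set (z := pp * (y * D + D * D / 2)).
  assert (E : VV (y + D) = VV y * exp z).
  { unfold VV, z. rewrite <- exp_plus. f_equal. field. }
  assert (S0 : 0 <= y * D + D * D / 2).
  { assert (0 <= y * D) by nra. assert (0 <= D * D / 2) by (unfold Rdiv; assert (0 <= D * D) by nra; nra). lra. }
  assert (S1 : y * D + D * D / 2 <= D * (y + M0)).
  { assert (D * D / 2 <= D * M0) by (unfold Rdiv; nra). nra. }
  assert (Hz0 : 0 <= z) by (unfold z; nra).
  assert (Hz : z <= D * (y + M0)) by (unfold z; nra).
  assert (X := expm1_le z).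
  assert (V0 : 0 < VV y) by apply exp_pos.
  assert (Vm : VV (y + D) <= VV (y + M0)) by (apply VV_mono; lra).
  assert (VV (y + D) - VV y <= z * VV (y + D)) by (rewrite E; nra).
  assert (0 < VV (y + D)) by apply exp_pos.
  assert (0 <= D * (y + M0)) by nra.
  nra.
Qed.

Lemma VV_step : exists K, 0 <= K /\ forall n, VV (yy (S n)) <= VV (yy n) + K.
Proof.
  assert (P := pp_bounds). assert (HM := M0_pos). assert (Hc := cst_c_pos).
  set (al := (1 - pp) / 2). set (be := 2 * b + 1 + pp * M0). set (ga := - (2 * b * b) + M0 + pp * M0 * M0 / 2).
  set (Cq := ga + be * be / (4 * al)).
  assert (Hal : 0 < al) by (unfold al; lra).
  exists (M0 * cst_c * exp Cq + VV (2 * b + 1 + M0)).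
  split. { assert (0 < exp Cq) by apply exp_pos. assert (0 < VV (2 * b + 1 + M0)) by apply exp_pos.
    assert (0 <= M0 * cst_c * exp Cq) by (apply Rmult_le_pos; [apply Rmult_le_pos|]; lra). lra. }
  intros n. rewrite yy_S.
  destruct (Delta_bounds n) as [D0 [D1 D2]].
  set (D := a * Dp (ell n)) in *. set (y := yy n).
  assert (Hy : b <= y) by apply yy_ge_b.
  assert (I := VV_incr y D ltac:(lra) ltac:(lra)).
  assert (e1 : 0 < exp Cq) by apply exp_pos.
  destruct (Rle_or_lt (2 * b + 1) y) as [Hy2|Hy2].
  -
    assert (Eh : hf (ell n) = Q (y - 2 * b)) by (unfold hf, y, yy; f_equal; ring).
    assert (Mu := mills_upper (y - 2 * b) ltac:(lra)).
    assert (Pp := phi_pos (y - 2 * b)).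
    assert (Q (y - 2 * b) <= phi (y - 2 * b)).
    { apply Rle_trans with (phi (y - 2 * b) / (y - 2 * b)); auto.
      unfold Rdiv. assert (/ (y - 2 * b) <= 1).
      { rewrite <- Rinv_1. apply Rinv_le_contravar; lra. }
      assert (0 < / (y - 2 * b)) by (apply Rinv_0_lt_compat; lra). nra. }
    assert (Dphi : D <= M0 * (cst_c * exp (- ((y - 2 * b) * (y - 2 * b)) / 2))).
    { rewrite Eh in D2. unfold phi, gauss in *.
      replace ((y - 2 * b) ^ 2) with ((y - 2 * b) * (y - 2 * b)) in * by ring. nra. }
    assert (Ey := exp_ineq1_le (y + M0)).
    assert (Qd := quad_bound al be ga y Hal).
    assert (Expo : - ((y - 2 * b) * (y - 2 * b)) / 2 + (y + M0) + pp * ((y + M0) * (y + M0)) / 2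
                   = - al * y * y + be * y + ga).
    { unfold al, be, ga. field. }
    assert (Eall : exp (- ((y - 2 * b) * (y - 2 * b)) / 2) * exp (y + M0) * VV (y + M0) <= exp Cq).
    { unfold VV. rewrite <- !exp_plus. apply exp_le_mono. rewrite Expo. unfold Cq. lra. }
    assert (X1 : D * (y + M0) * VV (y + M0) <= M0 * (cst_c * exp (- ((y - 2 * b) * (y - 2 * b)) / 2)) * exp (y + M0) * VV (y + M0)).
    { assert (0 < VV (y + M0)) by apply exp_pos.
      apply Rmult_le_compat_r. lra. apply Rmult_le_compat; nra. }
    assert (X2 : M0 * (cst_c * exp (- ((y - 2 * b) * (y - 2 * b)) / 2)) * exp (y + M0) * VV (y + M0) <= M0 * cst_c * exp Cq).
    { replace (M0 * (cst_c * exp (- ((y - 2 * b) * (y - 2 * b)) / 2)) * exp (y + M0) * VV (y + M0))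
        with (M0 * cst_c * (exp (- ((y - 2 * b) * (y - 2 * b)) / 2) * exp (y + M0) * VV (y + M0))) by ring.
      apply Rmult_le_compat_l. nra. auto. }
    assert (0 < VV (2 * b + 1 + M0)) by apply exp_pos.
    lra.
  - assert (VV (y + D) <= VV (2 * b + 1 + M0)) by (apply VV_mono; lra).
    assert (0 < VV y) by apply exp_pos.
    assert (0 <= M0 * cst_c * exp Cq) by (apply Rmult_le_pos; [apply Rmult_le_pos|]; lra).
    lra.
Qed.


Lemma g_lower : exists k3, 0 < k3 /\ forall n : nat,
  k3 * exp (- ((1 + d) * (1 + d) * ln (INR n + 1))) <= gf (ell n).
Proof.
  destruct VV_step as [K [HK HKs]].
  destruct (Q_lower_exp d Hd) as [k2 [Hk2 Hk2']].
  set (K' := VV (yy 0) + K).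
  assert (V0 : 0 < VV (yy 0)) by apply exp_pos.
  assert (HK' : 0 < K') by (unfold K'; lra).
  exists (k2 * exp (- ((1 + d) * (1 + d) * ln K'))). split.
  { apply Rmult_lt_0_compat; auto. apply exp_pos. }
  intros n.
  assert (Vn : VV (yy n) <= VV (yy 0) + INR n * K).
  { induction n. simpl; lra. rewrite S_INR. assert (H := HKs n). lra. }
  assert (Hn := pos_INR n).
  assert (Vn2 : VV (yy n) <= K' * (INR n + 1)).
  { unfold K'. assert (INR n * K <= K * (INR n + 1)) by nra. nra. }
  assert (Ln : pp * (yy n * yy n) / 2 <= ln K' + ln (INR n + 1)).
  { rewrite <- ln_mult by lra. unfold VV in Vn2. rewrite <- (ln_exp (pp * (yy n * yy n) / 2)).
    apply ln_le_mono. apply exp_pos. auto. }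
  assert (Hy := yy_ge_b n).
  assert (G := Hk2' (yy n) ltac:(lra)).
  unfold gf. fold (yy n).
  apply Rle_trans with (k2 * exp (- ((1 + d) * (yy n * yy n) / 2))); auto.
  rewrite Rmult_assoc. apply Rmult_le_compat_l. lra.
  rewrite <- exp_plus. apply exp_le_mono.
  assert (E : (1 + d) * (yy n * yy n) / 2 = (1 + d) * (1 + d) * (pp * (yy n * yy n) / 2)).
  { unfold pp. field. lra. }
  rewrite E.
  assert (0 <= (1 + d) * (1 + d)) by nra.
  assert ((1 + d) * (1 + d) * (pp * (yy n * yy n) / 2) <= (1 + d) * (1 + d) * (ln K' + ln (INR n + 1))).
  { apply Rmult_le_compat_l; auto. }
  lra.
Qed.

End Pot.

Lemma main_dyn eps : 0 < eps -> exists k, 0 < k /\ forall n : nat,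
  k * exp (- ((1 + eps) * ln (INR n + 1))) <= prodf 0 n * gf (ell n).
Proof.
  intros He.
  set (dl := eps / (eps + 6)).
  assert (Hdl : 0 < dl) by (unfold dl; apply Rdiv_lt_0_compat; lra).
  assert (Hdl1 : dl <= 1) by (unfold dl; apply Rmult_le_reg_r with (eps + 6); [lra|]; unfold Rdiv; rewrite Rmult_assoc, Rinv_l by lra; lra).
  assert (Hdl3 : 3 * dl <= eps / 2).
  { unfold dl. apply Rmult_le_reg_r with (2 * (eps + 6)). lra.
    replace (3 * (eps / (eps + 6)) * (2 * (eps + 6))) with (6 * eps) by (field; lra).
    replace (eps / 2 * (2 * (eps + 6))) with (eps * (eps + 6)) by field. nra. }
  destruct (prod_lower (eps / 2) ltac:(lra)) as [k1 [Hk1 Hk1']].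
  destruct (g_lower dl Hdl) as [k3 [Hk3 Hk3']].
  exists (k1 * k3). split. apply Rmult_lt_0_compat; auto.
  intros n.
  assert (P1 := Hk1' n). assert (P2 := Hk3' n).
  set (L := ln (INR n + 1)) in *.
  assert (HL : 0 <= L) by (unfold L; apply ln_ge_0; assert (H := pos_INR n); lra).
  assert (Ex : exp (- ((1 + eps) * L)) <= exp (- (eps / 2 * L)) * exp (- ((1 + dl) * (1 + dl) * L))).
  { rewrite <- exp_plus. apply exp_le_mono.
    assert ((1 + dl) * (1 + dl) <= 1 + 3 * dl) by nra.
    assert (eps / 2 + (1 + dl) * (1 + dl) <= 1 + eps) by lra.
    nra. }
  assert (e1 := exp_pos (- (eps / 2 * L))). assert (e2 := exp_pos (- ((1 + dl) * (1 + dl) * L))).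
  apply Rle_trans with (k1 * exp (- (eps / 2 * L)) * (k3 * exp (- ((1 + dl) * (1 + dl) * L)))).
  - replace (k1 * exp (- (eps / 2 * L)) * (k3 * exp (- ((1 + dl) * (1 + dl) * L)))) with
       (k1 * k3 * (exp (- (eps / 2 * L)) * exp (- ((1 + dl) * (1 + dl) * L)))) by ring.
    apply Rmult_le_compat_l; [nra|auto].
  - apply Rmult_le_compat; auto; try (left; apply Rmult_lt_0_compat; auto).
Qed.

End Dyn.


Lemma Phi_Q x : Phi x = Q (- x).
Proof. unfold Q. rewrite Ropp_involutive. reflexivity. Qed.

Lemma Phi_bounds x : 0 <= Phi x <= 1.
Proof. rewrite Phi_Q. assert (H1 := Q_pos (- x)). assert (H2 := Q_lt1 (- x)). lra. Qed.

Lemma hist_nonneg sigma th l h : 0 <= hist_prob sigma th l h.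
Proof.
  revert l. induction h as [|x h IH]; intros l; simpl. lra.
  apply Rmult_le_pos; auto.
  unfold pact, Gth, Gplus, Gminus, Fplus, Fminus.
  destruct x, th; try apply Phi_bounds;
  match goal with |- 0 <= 1 - Phi ?z => assert (H := Phi_bounds z); lra end.
Qed.

Section Conn.
Variable sigma : R.
Hypothesis Hs : 0 < sigma.

Let a := sigma / 2.
Let b := / sigma.

Lemma Ha : 0 < a. Proof. unfold a; lra. Qed.
Lemma Hb : 0 < b. Proof. unfold b; apply Rinv_0_lt_compat; auto. Qed.
Lemma Hab : a * b = / 2. Proof. unfold a, b. field. lra. Qed.

Lemma Gplus_gf l : Gplus sigma (- l) = gf a b l.
Proof. unfold Gplus, Fplus, gf, Q. f_equal. unfold a, b. field. lra. Qed.

Lemma Gminus_hf l : Gminus sigma (- l) = hf a b l.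
Proof. unfold Gminus, Fminus, hf, Q. f_equal. unfold a, b. field. lra. Qed.

Lemma update_ell j : update sigma (ell a b j) true = ell a b (S j).
Proof. simpl. unfold Dplus, Dp. rewrite Gplus_gf, Gminus_hf. reflexivity. Qed.

Lemma hist_true m j : hist_prob sigma true (ell a b j) (repeat true m ++ false :: nil)
   = prodf a b j m * gf a b (ell a b (j + m)).
Proof.
  revert j. induction m; intros j.
  - simpl. rewrite Nat.add_0_r. unfold Gth. rewrite Gplus_gf. ring.
  - simpl (repeat true (S m) ++ false :: nil). simpl hist_prob.
    change (ell a b j + Dplus sigma (ell a b j)) with (update sigma (ell a b j) true).
    rewrite update_ell, IHm. simpl prodf. rewrite Gplus_gf.
    replace (S j + m)%nat with (j + S m)%nat by lia. ring.
Qed.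

End Conn.

Theorem theorem5 (sigma : R) (Hsigma : 0 < sigma) :
  forall eps : R, 0 < eps ->
  exists k : R, 0 < k /\
    forall t : nat, (1 <= t)%nat ->
      ProbT1 sigma t >= k / Rpower (INR t) (1 + eps).
Proof.
  intros eps He.
  destruct (main_dyn (sigma / 2) (/ sigma) (Ha sigma Hsigma) (Hb sigma Hsigma) (Hab sigma Hsigma) eps He)
    as [k [Hk Hk']].
  exists (k / 2). split. lra.
  intros t Ht.
  destruct t as [|n]. lia.
  replace (S n - 1)%nat with n by lia.
  assert (Hn := Hk' n).
  unfold ProbT1. replace (S n - 1)%nat with n by lia.
  assert (H0 := hist_nonneg sigma false 0 (repeat false n ++ true :: nil)).
  assert (E := hist_true sigma Hsigma n 0). simpl (ell _ _ 0) in E. simpl (0 + n)%nat in E.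
  rewrite E.
  unfold Rpower. rewrite S_INR.
  assert (E2 : k / 2 / exp ((1 + eps) * ln (INR n + 1)) = / 2 * (k * exp (- ((1 + eps) * ln (INR n + 1))))).
  { rewrite exp_Ropp. field. apply Rgt_not_eq, exp_pos. }
  rewrite E2. lra.
Qed.
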